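(* Let $p$ be a prime and let $b$ be an integer with $0<b\le b^{-1}<p$. Let $G$ act on $S=\mathbb{C}[x_1,x_2]$ via $x_1\mapsto\zeta x_1$, $x_2\mapsto\zeta^b x_2$. The following are equivalent: (1) $S^G_{1,b}$ is generated by 4 invariants, i.e. $|\mathrm{inv}_{1,b}|=4$ (equivalently $\operatorname{codim}\ker\varphi_{1,b}=2$); (2) $(p-b)(p-b^{-1})=p+1$.
   Context: Here $\zeta=e^{2\pi i/p}$ and $G=\mathbb{Z}/p\mathbb{Z}=\langle\zeta\rangle$; $S^G_{1,b}$ is the invariant ring, spanned by the monomials $x_1^cx_2^d$ with $c+bd\equiv0\pmod p$. $b^{-1}$ is the unique integer $0<b^{-1}<p$ with $bb^{-1}\equiv1\pmod p$. $\mathrm{inv}_{1,b}$ denotes the minimal set of monomial generators of $S^G_{1,b}$ as a $\mathbb{C}$-algebra: the nonconstant invariant monomials that are not a product of two nonconstant invariant monomials. Writing $\mathrm{inv}_{1,b}=\{z_0,\dots,z_n\}$ in lexicographic order with $x_1>x_2$, let $R=\mathbb{C}[y_0,\dots,y_n]$ with $\deg y_i=\deg z_i$ and $\varphi_{1,b}:R\to S^G_{1,b}$ the $\mathbb{C}$-algebra map $y_i\mapsto z_i$. *)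

(* Defs.v *)
From mathcomp Require Import all_boot.
Set Implicit Arguments. Unset Strict Implicit. Unset Printing Implicit Defensive.

(* A monomial x1^c x2^d of S = C[x1,x2] is encoded by its exponent pair (c,d);
   the product of monomials corresponds to componentwise addition of exponents. *)
Definition monomial := (nat * nat)%type.

Definition mono_mul (m1 m2 : monomial) : monomial := (m1.1 + m2.1, m1.2 + m2.2).

(* x1^c x2^d is G-invariant for the action x1 -> zeta x1, x2 -> zeta^b x2
   iff zeta^(c + b d) = 1 iff c + b d = 0 mod p. *)
Definition invariant_mono (p b : nat) (m : monomial) : bool :=
  (m.1 + b * m.2) %% p == 0.

Definition nonconst_mono (m : monomial) : bool := 0 < m.1 + m.2.

Definition in_inv (p b : nat) (m : monomial) : Prop :=
  [/\ invariant_mono p b m, nonconst_mono m &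
      ~ exists m1 m2 : monomial,
          [/\ invariant_mono p b m1, nonconst_mono m1,
              invariant_mono p b m2, nonconst_mono m2 & m = mono_mul m1 m2]].

Definition inv_card_eq (p b n : nat) : Prop :=
  exists s : seq monomial,
    [/\ uniq s, (forall m, m \in s <-> in_inv p b m) & size s = n].

(* Main.v *)
Require Import Defs.
From mathcomp Require Import all_boot.
From mathcomp Require Import zify.

Lemma inv_dvd p b (m : monomial) : invariant_mono p b m = (p %| m.1 + b * m.2).
Proof. by []. Qed.

Lemma inv_mod p b c d : b <= p ->
  invariant_mono p b (c, d) = (c %% p == ((p - b) * d) %% p).
Proof.
move=> hb; rewrite /invariant_mono /= -(eqn_modDr (b * d)) -mulnDl subnK //.
by rewrite modnMr.
Qed.

Lemma inv_sub p b (m m1 : monomial) : invariant_mono p b m -> invariant_mono p b m1 ->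
  m1.1 <= m.1 -> m1.2 <= m.2 -> invariant_mono p b (m.1 - m1.1, m.2 - m1.2).
Proof.
rewrite !inv_dvd /= => h h1 l1 l2.
have E : m.1 + b * m.2 = (m.1 - m1.1 + b * (m.2 - m1.2)) + (m1.1 + b * m1.2).
  rewrite mulnBr; have : b * m1.2 <= b * m.2 by rewrite leq_mul2l l2 orbT.
  lia.
by move: h; rewrite E dvdn_addl.
Qed.

Lemma split_contra p b (m m1 : monomial) : in_inv p b m ->
  invariant_mono p b m1 -> nonconst_mono m1 -> m1.1 <= m.1 -> m1.2 <= m.2 ->
  0 < (m.1 - m1.1) + (m.2 - m1.2) -> False.
Proof.
case=> hi hn hnd h1 n1 l1 l2 pos; apply: hnd.
exists m1, (m.1 - m1.1, m.2 - m1.2); split => //.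
- exact: inv_sub.
- move: l1 l2; case: (m) => c d; case: (m1) => c1 d1 /= l1 l2.
  rewrite /mono_mul /=; congr pair; lia.
Qed.

Lemma charA p b c d : 0 < p -> b <= p -> in_inv p b (c, d) ->
  (c, d) = (p, 0) \/ (c, d) = (0, p) \/
  [/\ 0 < d < p, c = ((p - b) * d) %% p &
      forall d', 0 < d' < d -> ((p - b) * d) %% p < ((p - b) * d') %% p].
Proof.
move=> p0 hb H; have [hi hn _] := H.
have hi' := hi; rewrite inv_mod // in hi'.
case: (posnP d) => [d0|dpos].
  subst d; left; move: hi; rewrite inv_dvd /= muln0 addn0 => pc.
  have cp : p <= c by apply: dvdn_leq => //; move: hn; rewrite /nonconst_mono /=; lia.
  case: (eqVneq c p) => [->//|cnp].
  exfalso; apply: (@split_contra p b _ (p, 0) H) => //=.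
  - by rewrite inv_dvd /= muln0 addn0.
  - rewrite /nonconst_mono /=; lia.
  - lia.
case: (leqP p d) => [pd|dp].
  case: (eqVneq (c, d) (0, p)) => [->|ne]; first by right; left.
  exfalso; apply: (@split_contra p b _ (0, p) H) => //=.
  - by rewrite inv_dvd /= add0n dvdn_mull.
  - move: ne; rewrite xpair_eqE; lia.
right; right.
set cd := (p - b) * d %% p.
have cdp : cd < p by rewrite ltn_pmod.
have ccd : cd <= c by move/eqP: hi'; rewrite -/cd => <-; rewrite leq_mod.
have hcd : invariant_mono p b (cd, d) by rewrite inv_mod // modn_mod.
split => //.
  case: (eqVneq c cd) => // ne; exfalso.
  apply: (@split_contra p b _ (cd, d) H) => //=.
  - rewrite /nonconst_mono /=; lia.
  - lia.
move=> d' /andP [d'0 d'd]; rewrite ltnNge; apply/negP => le.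
apply: (@split_contra p b _ ((p - b) * d' %% p, d') H) => //=.
- by rewrite inv_mod // modn_mod.
- rewrite /nonconst_mono /=; lia.
- rewrite -/cd; lia.
- lia.
- lia.
Qed.

Lemma charB p b d : 0 < p -> b <= p -> 0 < d < p ->
  (forall d', 0 < d' < d -> ((p - b) * d) %% p < ((p - b) * d') %% p) ->
  in_inv p b (((p - b) * d) %% p, d).
Proof.
move=> p0 hb /andP [d0 dp] rec; split.
- by rewrite inv_mod // modn_mod.
- rewrite /nonconst_mono /=; lia.
have cdp : (p - b) * d %% p < p by rewrite ltn_pmod.
case=> [[c1 d1]] [[c2 d2]] [i1 n1 i2 n2 /= E].
rewrite /mono_mul /= in E; case: E => E1 E2.
rewrite /nonconst_mono /= in n1 n2.
case: (posnP d1) => [z1|p1].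
  subst d1; move: i1; rewrite inv_dvd /= muln0 addn0 => /dvdn_leq; lia.
case: (posnP d2) => [z2|p2].
  subst d2; move: i2; rewrite inv_dvd /= muln0 addn0 => /dvdn_leq; lia.
have := rec d1; rewrite p1 /= => /(_ ltac:(lia)).
move: i1; rewrite inv_mod // => /eqP <-.
rewrite [c1 %% p]modn_small; lia.
Qed.

Lemma inv_p0 p b : 0 < p -> in_inv p b (p, 0).
Proof.
move=> p0; split.
- by rewrite inv_dvd /= muln0 addn0.
- rewrite /nonconst_mono /=; lia.
case=> [[c1 d1]] [[c2 d2]] [i1 n1 i2 n2 /= E].
rewrite /mono_mul /= in E; case: E => E1 E2.
rewrite /nonconst_mono /= in n1 n2.
have d10 : d1 = 0 by lia.
subst d1; move: i1; rewrite inv_dvd /= muln0 addn0 => /dvdn_leq; lia.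
Qed.

Lemma inv_0p p b : prime p -> 0 < b < p -> in_inv p b (0, p).
Proof.
move=> pp /andP [b0 bp]; have p0 := prime_gt0 pp; split.
- by rewrite inv_dvd /= add0n dvdn_mull.
- rewrite /nonconst_mono /=; lia.
case=> [[c1 d1]] [[c2 d2]] [i1 n1 i2 n2 /= E].
rewrite /mono_mul /= in E; case: E => E1 E2.
rewrite /nonconst_mono /= in n1 n2.
have c10 : c1 = 0 by lia.
subst c1; move: i1; rewrite inv_dvd /= add0n Euclid_dvdM // => /orP [] /dvdn_leq; lia.
Qed.

Theorem theorem3p5 (p b binv : nat) :
  prime p ->
  0 < binv < p -> (b * binv) %% p = 1 %% p ->
  0 < b <= binv ->
  (inv_card_eq p b 4 <-> (p - b) * (p - binv) = p + 1).
Proof.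
move=> pp /andP [bi0 bip] Hinv /andP [b0 bbi].
have p0 := prime_gt0 pp; have p1 := prime_gt1 pp.
have hb : b <= p by lia.
have hb' : 0 < b < p by lia.
set a := p - b; set k := p - binv.
have a0 : 0 < a by rewrite /a; lia.
have ap : a < p by rewrite /a; lia.
have k0 : 0 < k < p by rewrite /k; lia.
have F1 : (a * k) %% p = 1.
  have E : a * k + p * (b + binv) = p * p + b * binv.
    rewrite /a /k; have h1 : b * binv <= p * p by apply: leq_mul; lia.
    rewrite !mulnBl !mulnBr mulnDr; nia.
  have := congr1 (modn^~ p) E => /=.
  rewrite addnC (mulnC p (b + binv)) !modnMDl => ->.
  by rewrite Hinv modn_small.
have F2 : forall d, 0 < d < p -> (a * d) %% p != 0.
  move=> d /andP [d0 dp]; apply/negP => /eqP /eqP; rewrite -/(dvdn p (a * d)).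
  by rewrite Euclid_dvdM // => /orP [] /dvdn_leq; lia.
have F3 : forall x y, 0 < x < p -> 0 < y < p -> (a * x) %% p = (a * y) %% p -> x = y.
  have W : forall x y, 0 < x < p -> 0 < y < p -> x <= y -> (a * x) %% p = (a * y) %% p -> x = y.
    move=> x y hx hy xy E.
    have E2 : a * y = a * x + a * (y - x) by rewrite -mulnDr subnKC.
    move: E; rewrite E2 -{1}[a * x]addn0 => /eqP; rewrite eqn_modDl mod0n => /eqP h.
    case: (eqVneq (y - x) 0) => [|ne]; first lia.
    have := F2 (y - x); rewrite h eqxx /=; move=> /(_ ltac:(lia)) //.
  move=> x y hx hy E; case: (leqP x y) => xy; first exact: W.
  by symmetry; apply: W => //; lia.
split.
- case=> s [us ms ss].
  case: (eqVneq (a * k) (p + 1)) => // Hne; exfalso.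
  case: (eqVneq a 1) => [a1|a1].
    have sub : {subset s <= [:: (p, 0); (0, p); (1, 1)]}.
      case=> c d /ms /(@charA p b _ _ p0 hb); rewrite !inE.
      case=> [->|[->|]]; rewrite ?eqxx ?orbT //.
      rewrite -/a a1; case=> /andP [d0 dp] -> rec.
      case: (eqVneq d 1) => [->|dn1]; first by rewrite modn_small ?eqxx ?orbT.
      have := rec 1; rewrite mul1n (modn_small p1) => /(_ ltac:(lia)).
      rewrite modn_small //; lia.
    have := uniq_leq_size us sub; rewrite ss /=; lia.
  set q := p %/ a; set K := q + 1.
  have pa : p %% a != 0.
    apply/negP => /eqP /eqP; rewrite -/(dvdn a p) => /(prime_nt_dvdP pp) h.
    by move: (h a1); lia.
  have Dq := divn_eq p a; rewrite -/q mulnC in Dq.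
  have pma : p %% a < a by rewrite ltn_mod.
  have aK : a * K = a * q + a by rewrite mulnDr muln1.
  have aq : a * q < p by lia.
  have q1 : 1 <= q by rewrite /q divn_gt0 //; lia.
  have Kp : K < p.
    rewrite /K; have : 2 * q <= a * q by rewrite leq_mul2r; lia.
    lia.
  have h1 : p < a * K by move: aK Dq pma; clear; lia.
  have h2 : a * K < p + p by move: aK aq ap; clear; lia.
  have Er : (a * K) %% p = a * K - p.
    have -> : a * K = 1 * p + (a * K - p) by move: h1; clear; lia.
    rewrite modnMDl modn_small; move: h1 h2; clear; lia.
  move: Er; move Hr : (a * K %% p) => r Er.
  have r0 : 0 < r by move: Er aK Dq pma aq; clear; lia.
  have ra : r < a by move: Er aK Dq pma aq; clear; lia.
  have rec1 : forall d', 0 < d' < 1 -> (a * 1) %% p < (a * d') %% p by move=> d'; lia.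
  have G1 := @charB p b _ p0 hb (ltac:(lia) : 0 < 1 < p) rec1.
  have G2 : in_inv p b (r, K).
    rewrite -Hr; apply: (@charB p b _ p0 hb) => //; first by move: Kp q1; clear; lia.
    move=> d' /andP [d'0 d'K].
    have : a * d' <= a * q by rewrite leq_mul2l; move: d'K; rewrite /K; clear; lia.
    move=> h; rewrite (modn_small (m := a * d')); last by move: h aq; clear; lia.
    have : a <= a * d' by rewrite leq_pmulr.
    rewrite Hr; move: ra; clear; lia.
  have G3 : in_inv p b (1, k).
    rewrite -{1}F1; apply: (@charB p b _ p0 hb) => // d' /andP [d'0 d'k].
    rewrite -/a F1.
    have hd' : 0 < d' < p by move: d'0 d'k k0; clear; lia.
    case: (eqVneq (a * d' %% p) 1) => [e|ne].
      have := F3 d' k hd' k0; rewrite e F1 => /(_ erefl) e2.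
      by move: e2 d'k; clear; lia.
    have := F2 d' hd'; move: ne; clear; lia.
  have sub : {subset [:: (p, 0); (0, p); (a, 1); (r, K); (1, k)] <= s}.
    move=> m; rewrite !inE => /orP [/eqP ->|/or4P [] /eqP ->]; apply/ms.
    - exact: inv_p0.
    - exact: inv_0p.
    - by move: G1; rewrite muln1 modn_small.
    - exact: G2.
    - exact: G3.
  have un : uniq [:: (p, 0); (0, p); (a, 1); (r, K); (1, k)].
    have rk : (r == 1) ==> (K != k).
      apply/implyP => /eqP r1; apply/eqP => Kk; move/eqP: Hne; apply.
      by rewrite -Kk; move: r1 Er h1; clear; lia.
    rewrite /= !inE !xpair_eqE; move: rk p0 a1 a0 q1 Kp r0 k0 ap; clear; lia.
  have := uniq_leq_size un sub; rewrite ss /=; clear; lia.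
- move=> Hak.
  have a2 : 2 <= a.
    case: (leqP 2 a) => // a1; exfalso.
    have ha : a = 1 by move: a1 a0; clear; lia.
    by move: Hak k0; rewrite ha mul1n; clear; lia.
  have ad : forall d', 0 < d' < k -> a * d' < p.
    move=> d' /andP [_ h]; have : a * d' <= a * (k - 1).
      by rewrite leq_mul2l; move: h; clear; lia.
    rewrite mulnBr muln1; move: Hak a2; clear; lia.
  have G1 : in_inv p b (a, 1).
    have := @charB p b 1 p0 hb (ltac:(lia) : 0 < 1 < p).
    rewrite muln1 modn_small //; apply=> d'; clear; lia.
  have G3 : in_inv p b (1, k).
    rewrite -{1}F1; apply: (@charB p b _ p0 hb) => // d' hd'.
    rewrite -/a F1 modn_small; last exact: ad.
    have : a <= a * d' by rewrite leq_pmulr; move: hd'; clear; lia.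
    move: a2; clear; lia.
  exists [:: (p, 0); (0, p); (a, 1); (1, k)]; split => //.
    rewrite /= !inE !xpair_eqE; move: p0 a2 k0 ap; clear; lia.
  case=> c d; split.
    rewrite !inE => /or4P [] /eqP ->.
    - exact: inv_p0.
    - exact: inv_0p.
    - exact: G1.
    - exact: G3.
  move=> /(@charA p b _ _ p0 hb); rewrite !inE.
  case=> [->|[->|]]; rewrite ?eqxx ?orbT //.
  rewrite -/a; case=> /andP [d0 dp] -> rec.
  case: (ltngtP d k) => [dk|kd|->]; last by rewrite F1 eqxx !orbT.
    case: (eqVneq d 1) => [->|dn1]; first by rewrite muln1 modn_small ?eqxx ?orbT.
    have := rec 1; rewrite muln1 (modn_small ap).
    move=> /(_ ltac:(move: d0 dn1; clear; lia)).
    rewrite modn_small; last by apply: ad; rewrite d0.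
    have : a <= a * d by rewrite leq_pmulr.
    clear; lia.
  have := rec k; rewrite F1 => /(_ ltac:(move: k0 kd; clear; lia)).
  have := F2 d; rewrite d0 dp => /(_ erefl); clear; lia.
Qed.
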